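(* For $\xi = (\tau_L,\delta_L,\tau_R,\delta_R) \in \mathbb{R}^4$ let $f_\xi:\mathbb{R}^2\to\mathbb{R}^2$ be $$f_\xi(x,y) = \begin{cases} (\tau_L x + y + 1,\ -\delta_L x), & x \le 0,\\ (\tau_R x + y + 1,\ -\delta_R x), & x \ge 0.\end{cases}$$ Let $\Phi = \{\xi \in \mathbb{R}^4 : \tau_L > |\delta_L + 1|,\ \tau_R < -|\delta_R+1|\}$, $\alpha(\xi) = \tau_L\tau_R + (\delta_L - 1)(\delta_R - 1)$, and $\mathcal{P}_2 = \{\xi \in \Phi : \delta_L\delta_R < 1,\ \alpha(\xi) > 0\}$. If $\xi \in \mathcal{P}_2$, then $f_\xi$ has an asymptotically stable $LR$-cycle, i.e. an asymptotically stable period-two orbit $\{P,Q\}$ with $P$ in the left half-plane $x<0$ and $Q$ in the right half-plane $x>0$. *)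

(* Defs.v *)
From Stdlib Require Import Reals.
Open Scope R_scope.

(* The border-collision normal form f_xi, xi = (tL, dL, tR, dR).
   Both branches agree on x = 0, so using the left branch there is harmless. *)
Definition bcnf (tL dL tR dR : R) (p : R * R) : R * R :=
  let (x, y) := p in
  if Rle_dec x 0 then (tL * x + y + 1, - dL * x)
  else (tR * x + y + 1, - dR * x).

Definition iter_map (g : R * R -> R * R) (n : nat) (z : R * R) : R * R :=
  Nat.iter n g z.

Definition dist2 (p q : R * R) : R :=
  sqrt ((fst p - fst q) ^ 2 + (snd p - snd q) ^ 2).

Definition dist_orbit (z P Q : R * R) : R := Rmin (dist2 z P) (dist2 z Q).

Definition period_two_orbit (g : R * R -> R * R) (P Q : R * R) : Prop :=
  g P = Q /\ g Q = P /\ P <> Q.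

Definition lyapunov_stable_orbit (g : R * R -> R * R) (P Q : R * R) : Prop :=
  forall eps, eps > 0 -> exists delta, delta > 0 /\
    forall z, dist_orbit z P Q < delta ->
      forall n, dist_orbit (iter_map g n z) P Q < eps.

Definition attracting_orbit (g : R * R -> R * R) (P Q : R * R) : Prop :=
  exists eta, eta > 0 /\
    forall z, dist_orbit z P Q < eta ->
      Un_cv (fun n => dist_orbit (iter_map g n z) P Q) 0.

Definition asymptotically_stable_orbit (g : R * R -> R * R) (P Q : R * R) : Prop :=
  lyapunov_stable_orbit g P Q /\ attracting_orbit g P Q.

Definition LR_cycle (g : R * R -> R * R) (P Q : R * R) : Prop :=
  period_two_orbit g P Q /\ fst P < 0 /\ fst Q > 0.

(* Main.v *)
Require Import Defs.
From Stdlib Require Import Reals Lra Lia Psatz.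
Open Scope R_scope.

Definition N2 (e : R * R) : R := fst e ^ 2 + snd e ^ 2.
Definition padd (p e : R * R) : R * R := (fst p + fst e, snd p + snd e).

Lemma N2_ge0 e : 0 <= N2 e.
Proof. unfold N2. nra. Qed.

Lemma dist2_padd p x : dist2 (padd p x) p = sqrt (N2 x).
Proof. unfold dist2, N2, padd; simpl. f_equal. ring. Qed.

Lemma dist_orbit_ge0 z P Q : 0 <= dist_orbit z P Q.
Proof. unfold dist_orbit, Rmin, dist2. destruct (Rle_dec _ _); apply sqrt_pos. Qed.

Lemma sq_le_of_le_sqrt d x : 0 <= d -> 0 <= x -> d <= sqrt x -> d ^ 2 <= x.
Proof.
  intros h0 hx h. pose proof (sqrt_sqrt x hx). pose proof (sqrt_pos x). nra.
Qed.

Lemma dist_orbit_P P Q x : dist_orbit (padd P x) P Q ^ 2 <= N2 x.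
Proof.
  apply sq_le_of_le_sqrt. apply dist_orbit_ge0. apply N2_ge0.
  rewrite <- (dist2_padd P). unfold dist_orbit. apply Rmin_l.
Qed.

Lemma dist_orbit_Q P Q x : dist_orbit (padd Q x) P Q ^ 2 <= N2 x.
Proof.
  apply sq_le_of_le_sqrt. apply dist_orbit_ge0. apply N2_ge0.
  rewrite <- (dist2_padd Q). unfold dist_orbit. apply Rmin_r.
Qed.

Lemma lt_of_sq d e : 0 <= d -> 0 < e -> d ^ 2 < e ^ 2 -> d < e.
Proof. intros. nra. Qed.

Lemma sqrt_lt_sq x d : 0 <= x -> sqrt x < d -> x < d ^ 2.
Proof.
  intros hx h. pose proof (sqrt_sqrt x hx). pose proof (sqrt_pos x). nra.
Qed.

Lemma padd_sub p z : z = padd p (fst z - fst p, snd z - snd p).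
Proof. destruct z, p; unfold padd; simpl. f_equal; ring. Qed.

Lemma decomp z P Q d : dist_orbit z P Q < d ->
  (exists e, z = padd P e /\ N2 e < d ^ 2) \/ (exists e, z = padd Q e /\ N2 e < d ^ 2).
Proof.
  unfold dist_orbit, Rmin. destruct (Rle_dec _ _) as [h|h]; intro H.
  - left. exists (fst z - fst P, snd z - snd P). split. apply padd_sub.
    apply sqrt_lt_sq. apply N2_ge0. unfold dist2 in H. unfold N2. simpl. exact H.
  - right. exists (fst z - fst Q, snd z - snd Q). split. apply padd_sub.
    apply sqrt_lt_sq. apply N2_ge0. unfold dist2 in H. unfold N2. simpl. exact H.
Qed.

Lemma iter_succ_r (g : R * R -> R * R) n z : iter_map g (S n) z = iter_map g n (g z).
Proof.
  unfold iter_map. induction n; simpl. reflexivity. simpl in IHn. rewrite IHn. reflexivity.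
Qed.

Lemma conv_lemma (d : nat -> R) (A l : R) : 0 <= A -> 0 <= l < 1 ->
  (forall n, 0 <= d n) ->
  (forall k, d (2 * k + 1)%nat ^ 2 <= A * l ^ k) ->
  (forall k, d (2 * k + 2)%nat ^ 2 <= A * l ^ k) ->
  Un_cv d 0.
Proof.
  intros hA hl h0 h1 h2 eps heps.
  assert (hy : 0 < eps ^ 2 / (A + 1)).
  { apply Rdiv_lt_0_compat; nra. }
  destruct (pow_lt_1_zero l ltac:(rewrite Rabs_right; lra) _ hy) as [K0 HK].
  exists (2 * K0 + 1)%nat. intros n hn. unfold Rdist. rewrite Rminus_0_r, Rabs_right by (apply Rle_ge, h0).
  assert (key : forall k, (k >= K0)%nat -> A * l ^ k < eps ^ 2).
  { intros k hk. specialize (HK k hk). rewrite Rabs_right in HK by (apply Rle_ge, pow_le; lra).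
    pose proof (pow_le l k ltac:(lra)).
    apply Rmult_lt_compat_r with (r := A + 1) in HK; [|lra].
    unfold Rdiv in HK. rewrite Rmult_assoc, Rinv_l, Rmult_1_r in HK by lra. nra. }
  apply lt_of_sq; auto.
  destruct (Nat.Even_or_Odd n) as [[m hm]|[m hm]].
  - destruct m as [|m]; [lia|]. replace n with (2 * m + 2)%nat by lia.
    eapply Rle_lt_trans. apply h2. apply key. lia.
  - subst n. eapply Rle_lt_trans. apply h1. apply key. lia.
Qed.

Lemma iter_S (g : R*R -> R*R) n z : iter_map g (S n) z = g (iter_map g n z).
Proof. reflexivity. Qed.

Lemma core (g : R*R -> R*R) (P Q : R*R) (AL AR : R*R -> R*R) (V : R*R -> R)
  (r cL kap K l : R) :
  0 <= cL -> 0 < kap -> 0 <= l < 1 ->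
  (forall e, N2 (AL e) <= cL * N2 e) ->
  (forall e, kap * N2 e <= V e) -> (forall e, V e <= K * N2 e) ->
  (forall e, V (AR (AL e)) <= l * V e) ->
  (forall e, N2 e < r -> g (padd P e) = padd Q (AL e)) ->
  (forall e, N2 e < r -> g (padd Q e) = padd P (AR e)) ->
  forall e, (1 + cL) * K * N2 e < r * kap ->
  forall k, let E := Nat.iter k (fun x => AR (AL x)) e in
    iter_map g (2 * k) (padd P e) = padd P E /\
    iter_map g (2 * k + 1) (padd P e) = padd Q (AL E) /\
    V E <= l ^ k * V e.
Proof.
  intros hcL hk hl hAL hVl hVu hV gP gQ e he.
  assert (hVe : 0 <= V e) by (pose proof (hVl e); pose proof (N2_ge0 e); nra).
  assert (bnd : forall x, V x <= V e -> N2 x < r /\ N2 (AL x) < r).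
  { intros x hx. pose proof (hVl x). pose proof (hVu e). pose proof (hAL x).
    pose proof (N2_ge0 x). pose proof (N2_ge0 e). pose proof (N2_ge0 (AL x)).
    assert (kap * N2 x <= K * N2 e) by lra.
    split; nra. }
  induction k as [|k IH]; intro E.
  - simpl in E. subst E. simpl. split. reflexivity. split.
    apply gP. apply (bnd e); lra. lra.
  - destruct IH as [h0 [h1 h2]].
    set (E0 := Nat.iter k (fun x => AR (AL x)) e) in *.
    assert (hE : E = AR (AL E0)) by reflexivity.
    assert (hx : V E0 <= V e).
    { pose proof (pow_le l k ltac:(lra)).
      assert (l ^ k <= 1). { rewrite <- (pow1 k). apply pow_incr. lra. }
      nra. }
    destruct (bnd E0 hx) as [b1 b2].
    assert (ev : iter_map g (2 * S k) (padd P e) = padd P E).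
    { replace (2 * S k)%nat with (S (2 * k + 1)) by lia.
      rewrite iter_S, h1. rewrite gQ by exact b2.
      reflexivity. }
    split. exact ev. split.
    + replace (2 * S k + 1)%nat with (S (2 * S k)) by lia.
      rewrite iter_S, ev. apply gP.
      rewrite hE. apply (bnd (AR (AL E0))). 
      pose proof (hV E0). pose proof (hVl E0). pose proof (N2_ge0 E0). nra.
    + rewrite hE. simpl pow. pose proof (hV E0). 
      pose proof (pow_le l k ltac:(lra)). nra.
Qed.

Lemma bounds_P (g : R*R -> R*R) (P Q : R*R) (AL AR : R*R -> R*R) (V : R*R -> R)
  (r cL kap K l : R) :
  0 <= cL -> 0 < kap -> 0 <= l < 1 ->
  (forall e, N2 (AL e) <= cL * N2 e) ->
  (forall e, kap * N2 e <= V e) -> (forall e, V e <= K * N2 e) ->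
  (forall e, V (AR (AL e)) <= l * V e) ->
  (forall e, N2 e < r -> g (padd P e) = padd Q (AL e)) ->
  (forall e, N2 e < r -> g (padd Q e) = padd P (AR e)) ->
  forall e, (1 + cL) * K * N2 e < r * kap ->
  forall k, kap * dist_orbit (iter_map g (2 * k) (padd P e)) P Q ^ 2 <= (1 + cL) * K * N2 e * l ^ k /\
            kap * dist_orbit (iter_map g (2 * k + 1) (padd P e)) P Q ^ 2 <= (1 + cL) * K * N2 e * l ^ k.
Proof.
  intros hcL hk hl hAL hVl hVu hV gP gQ e he k.
  destruct (core g P Q AL AR V r cL kap K l hcL hk hl hAL hVl hVu hV gP gQ e he k) as [h0 [h1 h2]].
  set (E := Nat.iter k (fun x => AR (AL x)) e) in *.
  rewrite h0, h1.
  pose proof (dist_orbit_P P Q E). pose proof (dist_orbit_Q P Q (AL E)).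
  pose proof (hVl E). pose proof (hVu e). pose proof (hAL E). pose proof (N2_ge0 e).
  pose proof (N2_ge0 E). pose proof (pow_le l k ltac:(lra)).
  assert (kap * N2 E <= l ^ k * (K * N2 e)) by nra.
  split; nra.
Qed.

Lemma all_P (g : R*R -> R*R) (P Q : R*R) (AL AR : R*R -> R*R) (V : R*R -> R)
  (r cL kap K l : R) :
  0 <= cL -> 0 < kap -> 0 <= l < 1 ->
  (forall e, N2 (AL e) <= cL * N2 e) ->
  (forall e, kap * N2 e <= V e) -> (forall e, V e <= K * N2 e) ->
  (forall e, V (AR (AL e)) <= l * V e) ->
  (forall e, N2 e < r -> g (padd P e) = padd Q (AL e)) ->
  (forall e, N2 e < r -> g (padd Q e) = padd P (AR e)) ->
  forall e, (1 + cL) * K * N2 e < r * kap ->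
  forall n, kap * dist_orbit (iter_map g n (padd P e)) P Q ^ 2 <= (1 + cL) * K * N2 e.
Proof.
  intros hcL hk hl hAL hVl hVu hV gP gQ e he n.
  assert (hK : 0 <= K) by (pose proof (hVl (1,0)); pose proof (hVu (1,0)); unfold N2 in *; simpl in *; nra).
  assert (0 <= (1 + cL) * K * N2 e) by (pose proof (N2_ge0 e); apply Rmult_le_pos; nra).
  destruct (Nat.Even_or_Odd n) as [[m hm]|[m hm]]; subst n;
  destruct (bounds_P g P Q AL AR V r cL kap K l hcL hk hl hAL hVl hVu hV gP gQ e he m) as [b1 b2];
  assert (l ^ m <= 1) by (rewrite <- (pow1 m); apply pow_incr; lra);
  pose proof (pow_le l m ltac:(lra)); nra.
Qed.

Lemma abstract_stab (g : R*R -> R*R) (P Q : R*R) (AL AR : R*R -> R*R) (V : R*R -> R)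
  (r cL cR kap K l : R) :
  0 < r -> 0 <= cL -> 0 <= cR -> 0 < kap -> 0 <= l < 1 ->
  (forall e, N2 (AL e) <= cL * N2 e) ->
  (forall e, N2 (AR e) <= cR * N2 e) ->
  (forall e, kap * N2 e <= V e) -> (forall e, V e <= K * N2 e) ->
  (forall e, V (AR (AL e)) <= l * V e) ->
  (forall e, N2 e < r -> g (padd P e) = padd Q (AL e)) ->
  (forall e, N2 e < r -> g (padd Q e) = padd P (AR e)) ->
  asymptotically_stable_orbit g P Q.
Proof.
  intros hr hcL hcR hk hl hAL hAR hVl hVu hV gP gQ.
  assert (hK : 0 <= K) by (pose proof (hVl (1,0)); pose proof (hVu (1,0)); unfold N2 in *; simpl in *; nra).
  set (SS := (1 + cL) * (K + 1) * (cR + 1)).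
  assert (hS : 0 <= SS) by (unfold SS; repeat apply Rmult_le_pos; lra).
  assert (main : forall eps, eps > 0 -> exists delta, delta > 0 /\
    forall z, dist_orbit z P Q < delta ->
      (forall n, dist_orbit (iter_map g n z) P Q < eps) /\
      Un_cv (fun n => dist_orbit (iter_map g n z) P Q) 0).
  { intros eps heps.
    set (m := Rmin (r * kap) (Rmin (eps ^ 2 * kap) (Rmin r (eps ^ 2)))).
    assert (hm : 0 < m).
    { unfold m. assert (0 < eps ^ 2) by nra. repeat apply Rmin_glb_lt; nra. }
    assert (hm1 : m <= r * kap) by apply Rmin_l.
    assert (hm2 : m <= eps ^ 2 * kap) by (unfold m; eapply Rle_trans; [apply Rmin_r|apply Rmin_l]).
    assert (hm3 : m <= r) by (unfold m; eapply Rle_trans; [apply Rmin_r|]; eapply Rle_trans; [apply Rmin_r|apply Rmin_l]).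
    assert (hm4 : m <= eps ^ 2) by (unfold m; eapply Rle_trans; [apply Rmin_r|]; eapply Rle_trans; [apply Rmin_r|apply Rmin_r]).
    assert (hq : 0 < m / (SS + 1)) by (apply Rdiv_lt_0_compat; lra).
    exists (sqrt (m / (SS + 1))). split. apply sqrt_lt_R0. exact hq.
    intros z hz.
    assert (hsmall : forall e, N2 e < sqrt (m / (SS + 1)) ^ 2 -> SS * N2 e < m /\ N2 e < m).
    { intros e he. rewrite pow2_sqrt in he by lra. pose proof (N2_ge0 e).
      apply Rmult_lt_compat_r with (r := SS + 1) in he; [|lra].
      unfold Rdiv in he. rewrite Rmult_assoc, Rinv_l, Rmult_1_r in he by lra. split; nra. }
    assert (hA : 0 <= (1 + cL) * K) by (apply Rmult_le_pos; lra).
    assert (SK : forall x, 0 <= x -> (1 + cL) * K * x <= SS * x).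
    { intros x hx. unfold SS. assert ((1 + cL) * K <= (1 + cL) * (K + 1) * (cR + 1)).
      { assert ((1+cL) * K <= (1+cL)*(K+1)) by nra. assert (0 <= (1+cL)*(K+1)) by nra. nra. }
      nra. }
    assert (SKR : forall x, 0 <= x -> (1 + cL) * K * (cR * x) <= SS * x).
    { intros x hx. unfold SS. assert (0 <= (1+cL) * K) by nra.
      assert ((1 + cL) * K * cR <= (1 + cL) * (K + 1) * (cR + 1)).
      { assert ((1+cL)*K*cR <= (1+cL)*(K+1)*cR) by nra. nra. }
      nra. }
    destruct (decomp z P Q _ hz) as [[e [-> he]]|[e [-> he]]];
      destruct (hsmall e he) as [s1 s2]; pose proof (N2_ge0 e).
    - assert (c1 : (1 + cL) * K * N2 e < r * kap) by (pose proof (SK (N2 e) ltac:(lra)); lra).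
      assert (c2 : (1 + cL) * K * N2 e < eps ^ 2 * kap) by (pose proof (SK (N2 e) ltac:(lra)); lra).
      split.
      + intro n. pose proof (all_P g P Q AL AR V r cL kap K l hcL hk hl hAL hVl hVu hV gP gQ e c1 n).
        apply lt_of_sq. apply dist_orbit_ge0. lra. nra.
      + apply conv_lemma with (A := (1 + cL) * K * N2 e / kap) (l := l); auto.
        * unfold Rdiv; apply Rmult_le_pos; [nra|apply Rlt_le, Rinv_0_lt_compat; lra].
        * intro; apply dist_orbit_ge0.
        * intro k. destruct (bounds_P g P Q AL AR V r cL kap K l hcL hk hl hAL hVl hVu hV gP gQ e c1 k) as [_ b].
          apply Rmult_le_reg_l with kap. lra. unfold Rdiv. 
          replace (kap * ((1 + cL) * K * N2 e * / kap * l ^ k)) with ((1 + cL) * K * N2 e * l ^ k) by (field; lra). exact b.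
        * intro k. destruct (bounds_P g P Q AL AR V r cL kap K l hcL hk hl hAL hVl hVu hV gP gQ e c1 (S k)) as [b _].
          replace (2 * k + 2)%nat with (2 * S k)%nat by lia.
          apply Rmult_le_reg_l with kap. lra. unfold Rdiv. 
          replace (kap * ((1 + cL) * K * N2 e * / kap * l ^ k)) with ((1 + cL) * K * N2 e * l ^ k) by (field; lra).
          eapply Rle_trans. exact b. simpl pow. pose proof (pow_le l k ltac:(lra)).
          assert (0 <= (1 + cL) * K * N2 e) by nra. apply Rmult_le_compat_l. lra. nra.
    - assert (ge : g (padd Q e) = padd P (AR e)) by (apply gQ; lra).
      pose proof (hAR e). pose proof (N2_ge0 (AR e)).
      assert (c1 : (1 + cL) * K * N2 (AR e) < r * kap).
      { pose proof (SKR (N2 e) ltac:(lra)). assert ((1 + cL) * K * N2 (AR e) <= (1 + cL) * K * (cR * N2 e)) by nra. lra. }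
      assert (c2 : (1 + cL) * K * N2 (AR e) < eps ^ 2 * kap).
      { pose proof (SKR (N2 e) ltac:(lra)). assert ((1 + cL) * K * N2 (AR e) <= (1 + cL) * K * (cR * N2 e)) by nra. lra. }
      split.
      + intros [|n].
        * simpl. pose proof (dist_orbit_Q P Q e). apply lt_of_sq. apply dist_orbit_ge0. lra.
          unfold iter_map. simpl. lra.
        * rewrite iter_succ_r, ge.
          pose proof (all_P g P Q AL AR V r cL kap K l hcL hk hl hAL hVl hVu hV gP gQ (AR e) c1 n).
          apply lt_of_sq. apply dist_orbit_ge0. lra. nra.
      + apply conv_lemma with (A := (1 + cL) * K * N2 (AR e) / kap) (l := l); auto.
        * unfold Rdiv; apply Rmult_le_pos; [nra|apply Rlt_le, Rinv_0_lt_compat; lra].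
        * intro; apply dist_orbit_ge0.
        * intro k. destruct (bounds_P g P Q AL AR V r cL kap K l hcL hk hl hAL hVl hVu hV gP gQ (AR e) c1 k) as [b _].
          replace (2 * k + 1)%nat with (S (2 * k)) by lia. rewrite iter_succ_r, ge.
          apply Rmult_le_reg_l with kap. lra. unfold Rdiv. 
          replace (kap * ((1 + cL) * K * N2 (AR e) * / kap * l ^ k)) with ((1 + cL) * K * N2 (AR e) * l ^ k) by (field; lra). exact b.
        * intro k. destruct (bounds_P g P Q AL AR V r cL kap K l hcL hk hl hAL hVl hVu hV gP gQ (AR e) c1 k) as [_ b].
          replace (2 * k + 2)%nat with (S (2 * k + 1)) by lia. rewrite iter_succ_r, ge.
          apply Rmult_le_reg_l with kap. lra. unfold Rdiv. 
          replace (kap * ((1 + cL) * K * N2 (AR e) * / kap * l ^ k)) with ((1 + cL) * K * N2 (AR e) * l ^ k) by (field; lra). exact b. }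
  split.
  - intros eps heps. destruct (main eps heps) as [d [hd H]]. exists d. split. exact hd.
    intros z hz. apply (H z hz).
  - destruct (main 1 ltac:(lra)) as [d [hd H]]. exists d. split. exact hd.
    intros z hz. apply (H z hz).
Qed.

Definition W (s rr a b : R) := a ^ 2 + 2 * s * a * b + rr * b ^ 2.

Lemma lyap_params T d : -(1+d) < T < 1+d -> d < 1 ->
  exists s rr, s * (1 + d) = - T * d /\ d ^ 2 < rr /\ T ^ 2 + 2 * s * T + rr < 1 /\ s ^ 2 < rr.
Proof.
  intros [h1 h2] hd.
  assert (hu : 0 < 1 + d) by lra.
  set (s := - T * d / (1 + d)).
  assert (hs : s * (1 + d) = - T * d) by (unfold s; field; lra).
  set (c0 := T ^ 2 + 2 * s * T).
  assert (hc0 : c0 * (1 + d) = T ^ 2 * (1 - d)) by (unfold c0; nra).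
  assert (hT : T ^ 2 < (1 + d) ^ 2) by nra.
  assert (hlt : c0 + d ^ 2 < 1).
  { assert ((c0 + d ^ 2) * (1 + d) < 1 * (1 + d)).
    { assert (T ^ 2 * (1 - d) < (1 + d) ^ 2 * (1 - d)) by (apply Rmult_lt_compat_r; lra). nra. }
    nra. }
  exists s, ((d ^ 2 + 1 - c0) / 2).
  assert (hsd : s ^ 2 <= d ^ 2).
  { assert (s ^ 2 * (1 + d) ^ 2 <= d ^ 2 * (1 + d) ^ 2).
    { replace (s ^ 2 * (1 + d) ^ 2) with ((s * (1 + d)) ^ 2) by ring. rewrite hs.
      replace ((- T * d) ^ 2) with (T ^ 2 * d ^ 2) by ring. 
      rewrite (Rmult_comm (d^2)). apply Rmult_le_compat_r. nra. lra. }
    nra. }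
  repeat split; try lra. fold c0. lra.
Qed.

Lemma W_upper s rr a b : s ^ 2 < rr -> W s rr a b <= (1 + s ^ 2 + rr) * (a ^ 2 + b ^ 2).
Proof. intros h. unfold W. pose proof (pow2_ge_0 (s*a - b)). pose proof (pow2_ge_0 a). pose proof (pow2_ge_0 b). assert (0 <= rr * a^2) by (apply Rmult_le_pos; nra). assert (0 <= s^2 * b^2) by (apply Rmult_le_pos; nra). nra. Qed.

Lemma W_decr T d s rr : s * (1 + d) = - T * d -> d ^ 2 < rr -> T ^ 2 + 2 * s * T + rr < 1 -> s ^ 2 < rr ->
  exists l, 0 <= l < 1 /\ forall a b, W s rr (T * a - d * b) a <= l * W s rr a b.
Proof.
  intros h1 h2 h3 h4.
  set (mu := Rmin (1 - (T ^ 2 + 2 * s * T + rr)) (rr - d ^ 2)).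
  assert (hmu : 0 < mu) by (unfold mu; apply Rmin_glb_lt; lra).
  assert (m1 : mu <= 1 - (T ^ 2 + 2 * s * T + rr)) by apply Rmin_l.
  assert (m2 : mu <= rr - d ^ 2) by apply Rmin_r.
  set (K0 := 1 + s ^ 2 + rr).
  assert (hK0 : mu < K0) by (unfold K0; nra).
  exists (1 - mu / K0). split.
  - split.
    + assert (mu / K0 < 1). { apply (Rmult_lt_reg_r K0). lra. unfold Rdiv. rewrite Rmult_assoc, Rinv_l; lra. } lra.
    + assert (0 < mu / K0) by (apply Rdiv_lt_0_compat; lra). lra.
  - intros a b.
    assert (Heq : W s rr (T * a - d * b) a = W s rr a b - (1 - (T ^ 2 + 2 * s * T + rr)) * a ^ 2 - (rr - d ^ 2) * b ^ 2).
    { unfold W. 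
      replace (2 * s * (T * a - d * b) * a) with (2 * s * T * a ^ 2 - 2 * (s * d) * a * b) by ring.
      replace (s * d) with (- T * d - s) by nra. ring. }
    rewrite Heq.
    assert (up : W s rr a b <= K0 * (a ^ 2 + b ^ 2)) by (unfold K0; apply W_upper; lra).
    assert (hx : mu / K0 * W s rr a b <= mu * (a ^ 2 + b ^ 2)).
    { apply (Rmult_le_reg_l K0). lra.
      replace (K0 * (mu / K0 * W s rr a b)) with (mu * W s rr a b) by (field; lra).
      assert (0 <= a ^ 2 + b ^ 2) by nra. nra. }
    assert (mu * a ^ 2 <= (1 - (T ^ 2 + 2 * s * T + rr)) * a ^ 2) by (apply Rmult_le_compat_r; [apply pow2_ge_0|lra]).
    assert (mu * b ^ 2 <= (rr - d ^ 2) * b ^ 2) by (apply Rmult_le_compat_r; [apply pow2_ge_0|lra]).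
    nra.
Qed.

Lemma W_lower s rr a b : s ^ 2 < rr -> (a ^ 2 + b ^ 2) * (rr - s ^ 2) <= (2 * rr + 1) * W s rr a b.
Proof.
  intros h. unfold W.
  assert (H1 : a ^ 2 <= 2 * (a + s * b) ^ 2 + 2 * s ^ 2 * b ^ 2) by (pose proof (pow2_ge_0 (a + 2 * s * b)); nra).
  assert (Heq : a ^ 2 + 2 * s * a * b + rr * b ^ 2 = (a + s * b) ^ 2 + (rr - s ^ 2) * b ^ 2) by ring.
  rewrite Heq.
  set (X := (a + s * b) ^ 2) in *. set (q := rr - s ^ 2).
  assert (hq : 0 < q) by (unfold q; lra).
  assert (hX : 0 <= X) by (unfold X; apply pow2_ge_0).
  pose proof (pow2_ge_0 b). pose proof (pow2_ge_0 s).
  assert (S1 : (a ^ 2 + b ^ 2) * q <= (2 * X + 2 * s ^ 2 * b ^ 2 + b ^ 2) * q) by (apply Rmult_le_compat_r; lra).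
  assert (S2 : 0 <= s ^ 2 * X) by (apply Rmult_le_pos; lra).
  assert (S3 : 0 <= s ^ 2 * b ^ 2 * q) by (apply Rmult_le_pos; [apply Rmult_le_pos|]; lra).
  assert (hr : rr = q + s ^ 2) by (unfold q; ring). clearbody q X. subst rr.
  nra.
Qed.


Theorem proposition4p1 (tL dL tR dR : R)
  (hL : tL > Rabs (dL + 1))
  (hR : tR < - Rabs (dR + 1))
  (hdelta : dL * dR < 1)
  (halpha : tL * tR + (dL - 1) * (dR - 1) > 0) :
  exists P Q : R * R,
    LR_cycle (bcnf tL dL tR dR) P Q /\
    asymptotically_stable_orbit (bcnf tL dL tR dR) P Q.
Proof.
  assert (a1 : tL > dL + 1) by (pose proof (Rle_abs (dL + 1)); lra).
  assert (a2 : tL > - (dL + 1)) by (pose proof (Rle_abs (-(dL + 1))); rewrite Rabs_Ropp in *; lra).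
  assert (b1 : - tR > dR + 1) by (pose proof (Rle_abs (dR + 1)); lra).
  assert (b2 : - tR > - (dR + 1)) by (pose proof (Rle_abs (-(dR + 1))); rewrite Rabs_Ropp in *; lra).
  set (D0 := (1 + dL) * (1 + dR) - tL * tR).
  assert (hD : 0 < D0).
  { unfold D0. assert (0 < (tL - (dL+1)) * (- tR - (dR+1))) by (apply Rmult_lt_0_compat; lra).
    assert (0 < (tL + (dL+1)) * (- tR + (dR+1))) by (apply Rmult_lt_0_compat; lra). nra. }
  set (p1 := (1 + dR + tR) / D0). set (q1 := (1 + dL + tL) / D0).
  assert (hp1 : p1 < 0).
  { unfold p1, Rdiv. assert (0 < / D0) by (apply Rinv_0_lt_compat; lra). nra. }
  assert (hq1 : 0 < q1).
  { unfold q1, Rdiv. assert (0 < / D0) by (apply Rinv_0_lt_compat; lra). nra. }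
  assert (cyc1 : q1 = tL * p1 + (- dR * q1) + 1) by (unfold p1, q1, D0 in *; field; lra).
  assert (cyc2 : p1 = tR * q1 + (- dL * p1) + 1) by (unfold p1, q1, D0 in *; field; lra).
  set (P := (p1, - dR * q1)). set (Q := (q1, - dL * p1)).
  exists P, Q.
  set (g := bcnf tL dL tR dR).
  set (AL := fun e : R * R => (tL * fst e + snd e, - dL * fst e)).
  set (AR := fun e : R * R => (tR * fst e + snd e, - dR * fst e)).
  set (r := Rmin (p1 ^ 2) (q1 ^ 2)).
  assert (hr : 0 < r) by (unfold r; apply Rmin_glb_lt; nra).
  assert (gP : forall e, N2 e < r -> g (padd P e) = padd Q (AL e)).
  { intros e he. assert (fst e ^ 2 < p1 ^ 2).
    { pose proof (Rmin_l (p1 ^ 2) (q1 ^ 2)). unfold N2 in he. pose proof (pow2_ge_0 (snd e)). fold r in H. lra. }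
    assert (p1 + fst e <= 0) by nra.
    unfold g, bcnf, padd, P, Q, AL; simpl. destruct (Rle_dec (p1 + fst e) 0); [|lra].
    f_equal. rewrite cyc1 at 2. ring. ring. }
  assert (gQ : forall e, N2 e < r -> g (padd Q e) = padd P (AR e)).
  { intros e he. assert (fst e ^ 2 < q1 ^ 2).
    { pose proof (Rmin_r (p1 ^ 2) (q1 ^ 2)). unfold N2 in he. pose proof (pow2_ge_0 (snd e)). fold r in H. lra. }
    assert (~ q1 + fst e <= 0) by nra.
    unfold g, bcnf, padd, P, Q, AR; simpl. destruct (Rle_dec (q1 + fst e) 0); [lra|].
    f_equal. rewrite cyc2 at 2. ring. ring. }
  split.
  - split; [|unfold P, Q; simpl; lra].
    split; [|split].
    + replace P with (padd P (0,0)) by (unfold padd, P; simpl; f_equal; ring).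
      rewrite gP by (unfold N2; simpl; lra). unfold padd, AL, Q; simpl. f_equal; ring.
    + replace Q with (padd Q (0,0)) by (unfold padd, Q; simpl; f_equal; ring).
      rewrite gQ by (unfold N2; simpl; lra). unfold padd, AR, P; simpl. f_equal; ring.
    + intro h. unfold P, Q in h. injection h. lra.
  - set (T := tL * tR - dL - dR). set (d := dL * dR).
    assert (hT : -(1 + d) < T < 1 + d) by (unfold T, d, D0 in *; split; nra).
    destruct (lyap_params T d hT hdelta) as [s [rr [f1 [f2 [f3 f4]]]]].
    destruct (W_decr T d s rr f1 f2 f3 f4) as [l [hl hW]].
    set (m := tR * tL - dL).
    set (V := fun e : R * R => W s rr (m * fst e + tR * snd e) (fst e)).
    set (c1 := tR ^ 2 + 2 + 2 * m ^ 2).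
    assert (htR : 0 < tR ^ 2) by nra.
    apply (abstract_stab g P Q AL AR V r (tL ^ 2 + 1 + dL ^ 2) (tR ^ 2 + 1 + dR ^ 2)
             (tR ^ 2 * (rr - s ^ 2) / ((2 * rr + 1) * c1)) ((1 + s ^ 2 + rr) * (m ^ 2 + tR ^ 2 + 1)) l).
    + exact hr.
    + pose proof (pow2_ge_0 tL). pose proof (pow2_ge_0 dL). lra.
    + pose proof (pow2_ge_0 tR). pose proof (pow2_ge_0 dR). lra.
    + assert (0 < c1) by (unfold c1; pose proof (pow2_ge_0 m); lra).
      apply Rdiv_lt_0_compat. apply Rmult_lt_0_compat; lra. apply Rmult_lt_0_compat; nra.
    + exact hl.
    + intro e. unfold N2, AL; simpl. pose proof (pow2_ge_0 (tL * snd e - fst e)).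
      pose proof (pow2_ge_0 (dL * snd e)). nra.
    + intro e. unfold N2, AR; simpl. pose proof (pow2_ge_0 (tR * snd e - fst e)).
      pose proof (pow2_ge_0 (dR * snd e)). nra.
    + intro e. unfold V.
      set (a := m * fst e + tR * snd e). set (b := fst e).
      pose proof (W_lower s rr a b f4).
      assert (hc : tR ^ 2 * N2 e <= c1 * (a ^ 2 + b ^ 2)).
      { unfold N2, c1, a, b. pose proof (pow2_ge_0 (m * fst e + tR * snd e + m * fst e)).
        pose proof (pow2_ge_0 (fst e)). pose proof (pow2_ge_0 m). pose proof (pow2_ge_0 (m * fst e + tR * snd e)).
        assert (tR ^ 2 * snd e ^ 2 = (m * fst e + tR * snd e - m * fst e) ^ 2) by ring.
        nra. }
      assert (0 < c1) by (unfold c1; pose proof (pow2_ge_0 m); lra).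
      assert (0 < 2 * rr + 1) by nra.
      assert (0 < rr - s ^ 2) by lra.
      apply (Rmult_le_reg_l ((2 * rr + 1) * c1)). nra.
      replace ((2 * rr + 1) * c1 * (tR ^ 2 * (rr - s ^ 2) / ((2 * rr + 1) * c1) * N2 e))
        with ((rr - s ^ 2) * (tR ^ 2 * N2 e)) by (field; lra).
      assert ((rr - s ^ 2) * (tR ^ 2 * N2 e) <= (rr - s ^ 2) * (c1 * (a ^ 2 + b ^ 2))) by (apply Rmult_le_compat_l; lra).
      assert ((a ^ 2 + b ^ 2) * (rr - s ^ 2) * c1 <= (2 * rr + 1) * W s rr a b * c1) by (apply Rmult_le_compat_r; lra).
      nra.
    + intro e. unfold V.
      set (a := m * fst e + tR * snd e). set (b := fst e).
      pose proof (W_upper s rr a b f4).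
      assert (a ^ 2 + b ^ 2 <= (m ^ 2 + tR ^ 2 + 1) * N2 e).
      { unfold a, b, N2. pose proof (pow2_ge_0 (m * snd e - tR * fst e)).
        pose proof (pow2_ge_0 (snd e)). pose proof (pow2_ge_0 (fst e)). pose proof (pow2_ge_0 m). pose proof (pow2_ge_0 tR). nra. }
      assert (0 <= 1 + s ^ 2 + rr) by nra.
      assert ((1 + s ^ 2 + rr) * (a ^ 2 + b ^ 2) <= (1 + s ^ 2 + rr) * ((m ^ 2 + tR ^ 2 + 1) * N2 e)) by (apply Rmult_le_compat_l; lra).
      lra.
    + intro e. unfold V.
      replace (W s rr (m * fst (AR (AL e)) + tR * snd (AR (AL e))) (fst (AR (AL e))))
        with (W s rr (T * (m * fst e + tR * snd e) - d * fst e) (m * fst e + tR * snd e)).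
      apply hW.
      unfold AR, AL, T, d, m; simpl. f_equal; ring.
    + exact gP.
    + exact gQ.
Qed.
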